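(* Let $n$ be a positive even integer and let $A\in\mathbb{M}_n(\mathbb{F}_3)$ be a non-derogatory matrix with $\operatorname{Trace}(A)=0$. Then there exists $M\in\mathbb{M}_n(\mathbb{F}_3)$ with $M^2=0$ such that $A+M$ is diagonalizable over $\mathbb{F}_3$.
   Context: $\mathbb{F}_3$ is the field with three elements. A square matrix is non-derogatory if its minimal polynomial equals its characteristic polynomial. A matrix $X\in\mathbb{M}_n(\mathbb{F}_3)$ is diagonalizable if there is an invertible $U\in\mathbb{M}_n(\mathbb{F}_3)$ with $U^{-1}XU$ diagonal. *)

(* Defs.v *)
From mathcomp Require Import all_boot all_order all_algebra.
Set Implicit Arguments. Unset Strict Implicit. Unset Printing Implicit Defensive.
Import GRing.Theory.
Local Open Scope ring_scope.

(* A square matrix is non-derogatory iff its minimal polynomial equals its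
   characteristic polynomial. (mxminpoly needs size m.+1.) *)
Definition nonderogatory (F : fieldType) (m : nat) (A : 'M[F]_m.+1) : Prop :=
  mxminpoly A = char_poly A.

Definition diagonalizable_over (F : fieldType) (n : nat) (X : 'M[F]_n) : Prop :=
  exists U : 'M[F]_n, U \in unitmx /\ is_diag_mx (invmx U *m X *m U).

(* Main.v *)
Require Import Defs.
From mathcomp Require Import all_boot all_order all_algebra.
From mathcomp Require Import ring.
From Stdlib Require Import Classical_Prop.
Set Implicit Arguments. Unset Strict Implicit. Unset Printing Implicit Defensive.
Import GRing.Theory.
Local Open Scope ring_scope.

Section Poly.
Variable F : fieldType.

Lemma irr_factor (p : {poly F}) : (1 < size p)%N ->
  exists2 r, irreducible_poly r & r %| p.
Proof.
have [n] := ubnP (size p); elim: n p => // n IH p Hn Hp.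
apply: NNPP => Hno; apply Hno; exists p => //; split => // q Hq qp.
have p0 : p != 0 by rewrite -size_poly_gt0 (ltn_trans _ Hp).
case Hqp: (q %= p) => //; exfalso.
have q0 : q != 0 by apply: contraNneq p0 => q0; move: qp; rewrite q0 dvd0p.
have lt : (size q < size p)%N.
  rewrite ltn_neqAle dvdp_leq // andbT.
  by rewrite dvdp_size_eqp // Hqp.
have q1 : (1 < size q)%N.
  by move: Hq q0; rewrite -size_poly_gt0; case: (size q) => [|[|]].
have [r Hr rq] := IH q (leq_trans lt (ltnSE Hn)) q1.
by apply Hno; exists r => //; apply: dvdp_trans rq qp.
Qed.

Lemma split_pow (r a : {poly F}) : a != 0 -> (1 < size r)%N ->
  exists e c, a = r ^+ e * c /\ ~~ (r %| c).
Proof.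
move=> + Hr; have [n] := ubnP (size a); elim: n a => // n IH a Hn a0.
case Hra: (r %| a); last by exists 0%N, a; rewrite expr0 mul1r Hra.
have /dvdpP [a1 Ha1] := Hra.
have a10 : a1 != 0 by apply: contraNneq a0 => a10; rewrite Ha1 a10 mul0r.
have r0 : r != 0 by rewrite -size_poly_gt0 (ltn_trans _ Hr).
have lt : (size a1 < n)%N.
  rewrite -ltnS (leq_trans _ Hn) // Ha1 size_mul // ltnS.
  by move: Hr; case: (size r) => [|[|s]] // _; rewrite !addnS /= ltnS leq_addr.
have [e [c [E1 E2]]] := IH a1 lt a10.
exists e.+1, c; split => //.
by rewrite Ha1 E1 exprSr mulrAC.
Qed.

End Poly.
Section Cyclic.
Variables (F : fieldType) (N : nat) (A : 'M[F]_N.+1).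
Local Notation hA := (horner_mx A).

Lemma vhM (u : 'rV_N.+1) p q : u *m hA (p * q) = u *m hA p *m hA q.
Proof. by rewrite rmorphM /= -mulmxE mulmxA. Qed.

Lemma annih_coprime (a b q : {poly F}) (u w : 'rV_N.+1) :
  coprimep a b -> u *m hA a = 0 -> w *m hA b = 0 ->
  (u + w) *m hA q = 0 -> u *m hA q = 0.
Proof.
move=> /Bezout_eq1_coprimepP [[s t] /= Hst] ua wb uwq.
have ut : u = u *m hA (t * b).
  have h1 : hA (s * a + t * b) = 1%:M by rewrite Hst rmorph1.
  rewrite -{1}[u]mulmx1 -h1 rmorphD mulmxDr.
  by rewrite mulrC vhM ua mul0mx add0r.
have wtb : w *m hA (t * b * q) = 0.
  by rewrite -mulrA mulrC -mulrA vhM mulrC vhM wb !mul0mx.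
rewrite ut -vhM.
have -> : u *m hA (t * b * q) = (u + w) *m hA (t * b * q) - w *m hA (t * b * q).
  by rewrite mulmxDl addrK.
by rewrite wtb subr0 mulrC vhM uwq mul0mx.
Qed.

Local Notation mA := (mxminpoly A).

Lemma mA_neq0 : mA != 0.
Proof. by rewrite monic_neq0 // mxminpoly_monic. Qed.

Lemma exists_row_nz (M : 'M[F]_N.+1) : M != 0 -> exists u : 'rV_N.+1, u *m M != 0.
Proof.
move=> M0; case: (pickP (fun i => row i M != 0)) => [i Hi|H].
  by exists (delta_mx 0 i); rewrite -rowE.
case/eqP: M0; apply/row_matrixP => i; rewrite row0.
by move: (H i) => /negbFE/eqP.
Qed.

Lemma primary (r : {poly F}) e : irreducible_poly r -> r ^+ e %| mA ->
  exists v : 'rV_N.+1, v *m hA (r ^+ e) = 0 /\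
     forall q, v *m hA q = 0 -> r ^+ e %| q.
Proof.
move=> Hr; case: e => [|e] He.
  by exists 0; split => [|q _]; rewrite ?mul0mx // expr0 dvd1p.
have /dvdpP [c Hc] := He.
have r0 := irredp_neq0 Hr.
have Hm' : hA (c * r ^+ e) != 0.
  apply/negP => /eqP /mxminpoly_min Hd.
  have c0 : c != 0 by apply: contraNneq mA_neq0 => c0; rewrite Hc c0 mul0r.
  move: Hd; rewrite Hc exprSr mulrA -{2}[c * r ^+ e]mulr1 dvdp_mul2l.
    by rewrite dvdp1; case: Hr => Hs _ /eqP E; rewrite E in Hs.
  by rewrite mulf_neq0 ?expf_neq0.
have [w Hw] := exists_row_nz Hm'.
exists (w *m hA c); split.
  by rewrite -vhM -Hc mx_root_minpoly mulmx0.
move=> q Hq.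
suff: forall j, (j <= e.+1)%N -> r ^+ j %| q by apply.
elim=> [|j IH] Hj; first by rewrite expr0 dvd1p.
have /dvdpP [q1 Hq1] := IH (ltnW Hj).
case Hrq: (r %| q1).
  have /dvdpP [q2 Hq2] := Hrq.
  by rewrite Hq1 Hq2 -mulrA -exprS dvdp_mull.
exfalso; move/negP: Hw; apply.
have cop : coprimep (r ^+ e.+1) q1.
  by apply: coprimep_expl; rewrite irreducible_poly_coprime ?Hrq.
have /Bezout_eq1_coprimepP [[s t] /= Hst] := cop.
have H1 : w *m hA c *m hA (r ^+ j) = 0.
  have h1 : hA (r ^+ j * (s * r ^+ e.+1 + t * q1)) = hA (r ^+ j) by rewrite Hst mulr1.
  rewrite -h1 mulrDr rmorphD mulmxDr.
  have e1 : r ^+ j * (s * r ^+ e.+1) = r ^+ e.+1 * (r ^+ j * s) by ring.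
  have e2 : r ^+ j * (t * q1) = (q1 * r ^+ j) * t by ring.
  rewrite e1 e2 -Hq1 vhM -[w *m hA c *m hA (r ^+ e.+1)]vhM -Hc mx_root_minpoly mulmx0 mul0mx add0r.
  by rewrite vhM Hq mul0mx.
have -> : c * r ^+ e = c * (r ^+ j * r ^+ (e - j)).
  by rewrite -exprD subnKC.
by rewrite mulrA vhM vhM H1 mul0mx.
Qed.

Lemma local_gen (a : {poly F}) : a %| mA ->
  exists v : 'rV_N.+1, v *m hA a = 0 /\ forall q, v *m hA q = 0 -> a %| q.
Proof.
have [n] := ubnP (size a); elim: n a => // n IH a Hn Ha.
have a0 : a != 0 by apply: contraTneq Ha => ->; rewrite dvd0p mA_neq0.
case: (ltnP 1 (size a)) => Hs; last first.
  exists 0; split => [|q _]; first by rewrite mul0mx.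
  have : size a == 1%N by rewrite eqn_leq Hs size_poly_gt0.
  by rewrite size_poly_eq1 => /eqp_dvdl ->; rewrite dvd1p.
have [r Hr ra] := irr_factor Hs.
have Hr1 : (1 < size r)%N by case: Hr.
have [e [c [Ea Nc]]] := split_pow a0 Hr1.
have r0 := irredp_neq0 Hr.
have c0 : c != 0 by apply: contraNneq a0 => c0; rewrite Ea c0 mulr0.
have epos : (0 < e)%N.
  by case: e Ea => // Ea; move: ra; rewrite Ea expr0 mul1r (negPf Nc).
have ca : c %| a by rewrite Ea dvdp_mull.
have lt : (size c < n)%N.
  rewrite -ltnS (leq_trans _ Hn) // ltnS.
  case: e epos Ea => // e _ Ea.
  have E2 : a = r * (r ^+ e * c) by rewrite Ea exprS mulrA.
  have X0 : r ^+ e * c != 0 by rewrite mulf_neq0 ?expf_neq0.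
  have H : (size c <= size (r ^+ e * c)%R)%N by rewrite dvdp_leq ?dvdp_mull.
  rewrite E2 size_mul //.
  by case: (size r) Hr1 => [|[|s]] // _; rewrite !addSn /= ltnS (leq_trans H) ?leq_addl.
have [v2 [Hv2a Hv2q]] := IH c lt (dvdp_trans ca Ha).
have [v1 [Hv1a Hv1q]] := primary Hr (dvdp_trans (dvdp_trans (dvdp_mulr c (dvdpp (r ^+ e))) (eq_ind _ (fun x => x %| a) (dvdpp a) _ Ea)) Ha).
have cop : coprimep (r ^+ e) c.
  by apply: coprimep_expl; rewrite irreducible_poly_coprime.
exists (v1 + v2); split.
  by rewrite mulmxDl Ea vhM Hv1a mul0mx mulrC vhM Hv2a mul0mx addr0.
move=> q Hq; rewrite Ea Gauss_dvdp //.
apply/andP; split.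
  by apply: Hv1q; apply: (annih_coprime cop Hv1a Hv2a Hq).
apply: Hv2q; apply: (annih_coprime (a:=c) (b:=r ^+ e) _ Hv2a Hv1a).
  by rewrite coprimep_sym.
by rewrite addrC.
Qed.

Lemma cyclic_vec : exists v : 'rV_N.+1, forall q, v *m hA q = 0 -> mA %| q.
Proof. by have [v [_ H]] := local_gen (dvdpp mA); exists v. Qed.

End Cyclic.

Section QP.
Variables (F : fieldType) (y : nat -> F).

Fixpoint Qp j : {poly F} := if j is j'.+1 then Qp j' * ('X * ('X - (y j')%:P)) else 1.

Lemma Qp_monic j : Qp j \is monic.
Proof.
elim: j => [|j IH] /=; first exact: monic1.
by rewrite monicMl // monicMl ?monicX ?monicXsubC.
Qed.

Lemma size_Qp j : size (Qp j) = (j.*2).+1.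
Proof.
elim: j => [|j IH] /=; first by rewrite size_poly1.
rewrite size_Mmonic ?monic_neq0 ?Qp_monic // ?monicMl ?monicX ?monicXsubC // IH mulrC size_mulX ?polyXsubC_eq0 // size_XsubC doubleS.
by rewrite !addnS addn0.

Qed.
Lemma Qp_neq0 j : Qp j != 0.
Proof. exact: monic_neq0 (Qp_monic j). Qed.

Lemma size_sumQ k (a b : nat -> F) :
  (size (\sum_(j < k) (a j *: Qp j + b j *: (Qp j * 'X)))%R <= k.*2)%N.
Proof.
elim: k => [|k IH]; first by rewrite big_ord0 size_poly0.
rewrite big_ord_recr /= (leq_trans (size_polyD _ _)) // geq_max.
rewrite (leq_trans IH) ?leq_double ?leqnSn //=.
rewrite (leq_trans (size_polyD _ _)) // geq_max.
rewrite !(leq_trans (size_scale_leq _ _)) //.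
  by rewrite size_mulX ?Qp_neq0 // size_Qp doubleS.
by rewrite size_Qp doubleS leqnSn.
Qed.

Lemma lead_Qp j : (Qp j)`_(j.*2) = 1.
Proof. by have := Qp_monic j; move/monicP; rewrite /lead_coef size_Qp. Qed.

Lemma indepQ k (a b : nat -> F) :
  \sum_(j < k) (a j *: Qp j + b j *: (Qp j * 'X)) = 0 ->
  forall j, (j < k)%N -> a j = 0 /\ b j = 0.
Proof.
elim: k => [|k IH] // H.
have Hs := size_sumQ k a b.
move: H; rewrite big_ord_recr /= => H.
have hb : b k = 0.
  have := congr1 (fun p : {poly F} => p`_(k.*2.+1)) H.
  rewrite /= coef0 !coefD !coefZ coefMX /= lead_Qp mulr1.
  rewrite !nth_default ?size_Qp // ?(leq_trans Hs) //.
  by rewrite !mulr0 !add0r.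
have ha : a k = 0.
  have := congr1 (fun p : {poly F} => p`_(k.*2)) H.
  rewrite /= coef0 !coefD !coefZ lead_Qp hb mulr1 mul0r addr0.
  by rewrite nth_default ?(leq_trans Hs) // add0r.
move: H; rewrite ha hb !scale0r !addr0 => H j.
rewrite ltnS leq_eqVlt => /orP [/eqP ->|]; first by [].
exact: IH.
Qed.
End QP.

Lemma cube3 (x : 'F_3) : x ^+ 3 = x.
Proof. by apply/eqP; case: x => [[|[|[|i]]] Hi]. Qed.
Lemma quad3 (x t : 'F_3) : x != t -> x ^+ 2 + t * x + (t ^+ 2 - 1) = 0.
Proof. by case: x => [[|[|[|i]]] Hi]; case: t => [[|[|[|j]]] Hj] // _; apply/eqP. Qed.

Lemma cubeY K (Y : 'M['F_3]_K.+1) (y : 'I_K.+1 -> 'F_3) :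
  (forall j : 'I_K.+1, j != ord_max ->
     row j Y = y j *: delta_mx 0 j /\ y j != Y ord_max ord_max) ->
  Y *m Y *m Y = Y.
Proof.
move=> H; apply/row_matrixP => i; rewrite !row_mul.
case: (eqVneq i ord_max) => [->|Hi]; last first.
  have [Hr _] := H i Hi.
  have dY : delta_mx (0:'I_1) i *m Y = y i *: delta_mx 0 i by rewrite -rowE Hr.
  rewrite Hr -!scalemxAl dY -scalemxAl dY !scalerA.
  by rewrite -[y i in RHS]cube3 !exprS expr0 mulr1 mulrA.
set t := Y ord_max ord_max.
pose u : 'rV['F_3]_K.+1 := delta_mx 0 ord_max.
pose w := u *m Y - t *: u.
pose M := Y *m Y + t *: Y + (t ^+ 2 - 1)%:M.
have wM : w *m M = 0.
  rewrite (row_sum_delta w) mulmx_suml big1 // => j _.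
  case: (eqVneq j ord_max) => [->|Hj].
    by rewrite /w /u -rowE !mxE !eqxx /= mulr1 subrr scale0r mul0mx.
  have [Hr Hn] := H j Hj.
  have dY : delta_mx (0:'I_1) j *m Y = y j *: delta_mx 0 j by rewrite -Hr rowE.
  rewrite -scalemxAl /M !mulmxDr mulmxA dY -scalemxAl dY -scalemxAr dY mul_mx_scalar.
  rewrite !scalerA -!scalerDl.
  have -> : y j * y j + t * y j + (t ^+ 2 - 1) = 0 by rewrite -(quad3 Hn) expr2.
  by rewrite scale0r scaler0.
have F1 : u *m Y = t *: u + w by rewrite /w addrC subrK.
rewrite rowE -/u.
move: wM; rewrite /M !mulmxDr mulmxA -scalemxAr mul_mx_scalar => wM.
clearbody w u; rewrite F1 !mulmxDl -!scalemxAl F1 !mulmxDl -!scalemxAl F1.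
move: wM; move: (w *m Y) => a1; move: (a1 *m Y) => a2 wM.
apply/rowP => j; apply/eqP; rewrite -subr_eq0; apply/eqP.
have := congr1 (fun v : 'rV_K.+1 => v 0 j) wM; rewrite !mxE => K0.
have gen : forall (t U W A1 A2 : 'F_3), A2 + t * A1 + (t ^+ 2 - 1) * W = 0 ->
    t * (t * (t * U + W) + A1) + A2 - (t * U + W) = 0.
  move=> t0 U W A1 A2 E.
  transitivity ((t0 ^+ 3 - t0) * U + (A2 + t0 * A1 + (t0 ^+ 2 - 1) * W)); first by ring.
  by rewrite E cube3 subrr mul0r addr0.
exact: gen.
Qed.

Lemma y_exists K : exists y : nat -> 'F_3,
  forall j, (j < K)%N -> y j != - \sum_(l < K) y l.
Proof.
case b: (- (K%:R) == 1 :> 'F_3); last first.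
  exists (fun _ => 1) => j _; rewrite sumr_const card_ord.
  by apply/negP => /eqP E; move: b; rewrite -E eqxx.
case: K b => [|K] b; first by move: b; rewrite oppr0.
exists (fun l => if l == 0%N then -1 else 1) => j _.
rewrite big_ord_recl /= (eq_bigr (fun _ => 1)) => [|i _] //; rewrite sumr_const card_ord.
move: b; rewrite -[K.+1]addn1 natrD; move: (K%:R : 'F_3) => s.
by case: s => [[|[|[|i]]] Hi] //=; case: (j == 0%N).
Qed.

Lemma row_rsub m n1 n2 (M : 'M['F_3]_(m, n1 + n2)) i : row i (rsubmx M) = rsubmx (row i M).
Proof. by apply/rowP => l; rewrite !mxE. Qed.

Lemma main_block K (A : 'M['F_3]_(K.+1 + K.+1)) :
  mxminpoly (A : 'M_((K + K.+1).+1)) = char_poly A -> \tr A = 0 ->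
  exists M : 'M_(K.+1 + K.+1), M *m M = 0 /\ diagonalizable_over (A + M).
Proof.
move=> hmin htr.
have [y Hy] := y_exists K.
have [v Hv] := cyclic_vec (A : 'M_((K + K.+1).+1)).

pose Sf : 'M['F_3]_(K.+1, K.+1 + K.+1) := \matrix_(j < K.+1) (v *m horner_mx A (Qp y j)).
pose Sg := Sf *m A.
pose S := col_mx Sf Sg.
have rowSf j : row j Sf = v *m horner_mx A (Qp y j) by rewrite rowK.
have rowSg j : row j Sg = v *m horner_mx A (Qp y j * 'X).
  by rewrite row_mul rowSf rmorphM /= horner_mx_X -mulmxE mulmxA.
have sizemA : size (mxminpoly (A : 'M_((K + K.+1).+1))) = (K.+1).*2.+1.
  by rewrite hmin size_char_poly -addnn addSn.
have Sunit : S \in unitmx.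
  rewrite -row_free_unit -kermx_eq0; apply/eqP/row_matrixP => i; rewrite row0.
  have : row i (kermx S) *m S = 0 by rewrite -row_mul mulmx_ker row0.
  move: (row i (kermx S)) => x xS.
  rewrite -[x]hsubmxK in xS *.
  move: (lsubmx x) (rsubmx x) xS => xl xr; rewrite mul_row_col => xS.
  pose a j := xl 0 (inord j); pose b j := xr 0 (inord j).
  pose P := \sum_(j < K.+1) (a j *: Qp y j + b j *: (Qp y j * 'X)).
  have E : xl *m Sf + xr *m Sg = v *m horner_mx A P.
    rewrite [xl *m _]mulmx_sum_row [xr *m _]mulmx_sum_row rmorph_sum mulmx_sumr -big_split /=; apply: eq_bigr => j _.
    by rewrite rmorphD /= mulmxDr !linearZ /= rowSf rowSg /a /b inord_val.
  have P0 : P = 0.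
    apply/eqP; apply: contraT => P0.
    have := dvdp_leq P0 (Hv _ (etrans (esym E) xS)).
    by rewrite sizemA ltnNge (leq_trans (size_sumQ _ _ _ _)) ?leqnSn.
  have H0 := indepQ P0.
  have -> : xl = 0.
    by apply/rowP => j; rewrite mxE; have := (H0 j (ltn_ord j)).1; rewrite /a inord_val.
  have -> : xr = 0.
    by apply/rowP => j; rewrite mxE; have := (H0 j (ltn_ord j)).2; rewrite /b inord_val.
  by rewrite row_mx0.
pose A' := S *m A *m invmx S.
have EA' : A' = col_mx (Sf *m A *m invmx S) (Sg *m A *m invmx S) by rewrite /A' /S !mul_col_mx.
have [HinvF HinvG] : Sf *m invmx S = row_mx 1%:M 0 /\ Sg *m invmx S = row_mx 0 1%:M.
  by apply: eq_col_mx; rewrite -mul_col_mx -/S mulmxV // scalar_mx_block block_mxEv.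
have Hu : usubmx A' = row_mx 0 1%:M by rewrite EA' col_mxKu -/Sg HinvG.
pose P := dlsubmx A'; pose Y := drsubmx A'.
have EA'b : A' = block_mx 0 1%:M P Y.
  by rewrite -[A' in LHS]submxK /ulsubmx /ursubmx Hu row_mxKl row_mxKr.
have Hd : dsubmx A' = Sg *m A *m invmx S by rewrite EA' col_mxKd.
have rowY (j : 'I_K.+1) : (j < K)%N -> row j Y = y j *: delta_mx 0 j.
  move=> jK.
  have jK1 : (j.+1 < K.+1)%N by rewrite ltnS.
  have E1 : row j Sg *m A = row (inord j.+1) Sf + y j *: row j Sg.
    have EQ : Qp y j * 'X * 'X = Qp y j.+1 + y j *: (Qp y j * 'X).
      by rewrite /= -mul_polyC; ring.
    have hX : A = horner_mx A 'X by rewrite horner_mx_X.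
    have hM p q : horner_mx A p *m horner_mx A q = horner_mx A (p * q) by rewrite rmorphM.
    rewrite rowSg rowSf inordK // -mulmxA [X in _ *m (_ *m X)]hX hM EQ.
    by rewrite rmorphD /= linearZ /= mulmxDr scalemxAr.
  have E1' : row j Sf *m A *m A = row (inord j.+1) Sf + y j *: row j Sg by rewrite -row_mul; exact: E1.
  rewrite /Y /drsubmx row_rsub Hd !row_mul E1' mulmxDl -scalemxAl -!row_mul HinvF HinvG.
  by rewrite !row_row_mx scale_row_mx add_row_mx row_mxKr !row0 row1 add0r.
have trY : \tr Y = 0.
  have : \tr A' = \tr A by rewrite /A' mxtrace_mulC mulmxA mulVmx // mul1mx.
  by rewrite htr EA'b mxtrace_block mxtrace0 add0r.
have Ylast : Y ord_max ord_max = - \sum_(l < K) y l.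
  move: trY; rewrite /mxtrace big_ord_recr /= => /eqP; rewrite addrC addr_eq0 => /eqP ->.
  congr (- _); apply: eq_bigr => l _.
  move: (rowY (widen_ord (leqnSn K) l) (ltn_ord l)).
  by move/(congr1 (fun r : 'rV_K.+1 => r 0 (widen_ord (leqnSn K) l))); rewrite !mxE !eqxx /= mulr1.
have cY : Y *m Y *m Y = Y.
  apply: (@cubeY K Y (fun j => y j)) => j Hj.
  have jK : (j < K)%N by rewrite ltn_neqAle -ltnS ltn_ord andbT; move: Hj; apply: contra => /eqP E; apply/eqP/val_inj.
  by rewrite rowY // Ylast Hy.

pose D' := block_mx (0 : 'M_K.+1) 1%:M (1%:M - Y *m Y) Y.
pose N' := block_mx (0 : 'M_K.+1) (0 : 'M_K.+1) (1%:M - Y *m Y - P) (0 : 'M_K.+1).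
have ED : A' + N' = D'.
  by rewrite EA'b add_block_mx !addr0 [P + _]addrC subrK.
have NN : N' *m N' = 0.
  by rewrite mulmx_block !mulmx0 !mul0mx !addr0 block_mx0.
have YW : Y *m (1%:M - Y *m Y) = 0 by rewrite mulmxBr mulmx1 mulmxA cY subrr.
have DD : D' *m D' *m D' = D'.
  rewrite !mulmx_block !mulmx0 !mul0mx !mul1mx !mulmx1 !add0r.
  by rewrite YW subrK !mul1mx add0r.
have EA : A = invmx S *m A' *m S by rewrite /A' -!mulmxA mulKmx // mulVmx // mulmx1.
exists (invmx S *m N' *m S); split.
  by rewrite -!mulmxA [S *m _]mulmxA mulmxV // mul1mx [N' *m (N' *m S)]mulmxA NN !mul0mx mulmx0.
pose Dm := invmx S *m D' *m S.
have EAM : A + invmx S *m N' *m S = Dm by rewrite /Dm -ED EA mulmxDr mulmxDl.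
rewrite EAM.
have Dcube : Dm *m Dm *m Dm = Dm.
  have DD' : D' *m (D' *m (D' *m S)) = D' *m S by rewrite !mulmxA DD.
  by rewrite /Dm -!mulmxA !mulKVmx // DD'.

have hD : diagonalizable (Dm : 'M_((K + K.+1).+1)).
  apply/diagonalizableP; exists [:: 0; 1; -1] => //.
  apply: mxminpoly_min.
  have Ep : \prod_(x <- [:: 0; 1; -1]) ('X - x%:P) = 'X^3 - 'X :> {poly 'F_3}.
    by rewrite !big_cons big_nil polyC0 polyC1 polyCN; ring.
  rewrite Ep rmorphB /= rmorphXn /= horner_mx_X.
  by rewrite !exprS expr0 mulr1 -!mulmxE mulmxA Dcube subrr.
case: hD => Q Qunit HQ.
exists (invmx Q); split; first by rewrite unitmx_inv.
by move: HQ; rewrite invmxK /similar_to /conjmx pinvmxE.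
Qed.
Theorem proposition3p1 (m : nat) (A : 'M['F_3]_m.+1) :
  ~~ odd m.+1 -> nonderogatory A -> \tr A = 0 ->
  exists M : 'M['F_3]_m.+1, M *m M = 0 /\ diagonalizable_over (A + M).
Proof.
move=> hodd hnd htr.
have [K hK] : exists K, m = (K + K.+1)%N.
  exists m./2; rewrite addnS addnn.
  by move: hodd; rewrite /= negbK => hm; rewrite -[m in LHS]odd_double_half hm.
subst m; exact: main_block.
Qed.
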